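(* Let $n\in\mathbb{N}$, let $f:\mathbb{R}^n\to\mathbb{R}$ be a continuous convex function, let $\mathbf{X}=(X_1,\dots,X_n)$ with $X_i\in\mathcal{E}$, and let $\mathbb{F}$ be a conditional expectation on $\mathcal{E}$. Write $\mathbb{F}\mathbf{X}=(\mathbb{F}X_1,\dots,\mathbb{F}X_n)$. If $f(\mathbf{X})\in\mathcal{E}$, then $\mathbb{F}(f(\mathbf{X}))\ge f(\mathbb{F}\mathbf{X})$.
   Context: Let $\mathcal{E}$ be an order complete vector lattice with a weak order unit $E$, $K$ its Stone space (extremally disconnected compact Hausdorff), and $C^\infty(K)$ the vector lattice (and f-algebra) of continuous functions $K\to[-\infty,\infty]$ finite off a nowhere dense set (identified when equal off a nowhere dense set), which is the universal completion $\mathcal{E}^u$. Fix a Maeda–Ogasawara representation of $\mathcal{E}$ as an order dense ideal of $C^\infty(K)$ with $E$ corresponding to $\mathbf{1}$. For continuous $f:\mathbb{R}^n\to\mathbb{R}$ and $X_1,\dots,X_n\in C^\infty(K)$, $f(\mathbf{X})=f(X_1,\dots,X_n)$ denotes the unique element of $C^\infty(K)$ agreeing with $\omega\mapsto f(X_1(\omega),\dots,X_n(\omega))$ on the open dense set where all $X_i$ are finite. A conditional expectation on $\mathcal{E}$ is an order continuous, strictly positive linear projection $\mathbb{F}:\mathcal{E}\to\mathcal{E}$ whose range is an order complete vector sublattice of $\mathcal{E}$ and with $\mathbb{F}E=E$. *)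

(* Defs.v *)
From HB Require Import structures.
From mathcomp Require Import all_boot all_order all_algebra.
From mathcomp Require Import all_classical all_reals all_analysis.
From Stdlib Require Import ClassicalEpsilon.

Set Implicit Arguments.
Unset Strict Implicit.
Unset Printing Implicit Defensive.

Import Order.TTheory GRing.Theory Num.Theory.
Import numFieldNormedType.Exports.
Local Open Scope classical_set_scope.
Local Open Scope ring_scope.

Definition nowhere_dense (K : topologicalType) (A : set K) : Prop :=
  interior (closure A) = set0.

Definition extremally_disconnected (K : topologicalType) : Prop :=
  forall U : set K, open U -> open (closure U).

Definition stonean (K : topologicalType) : Prop :=
  [/\ compact [set: K], hausdorff_space K & extremally_disconnected K].

(* C^oo(K).  Its elements are continuous K -> [-oo,+oo] finite off a        *)
(* nowhere dense set.  Two continuous functions into the Hausdorff space     *)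
(* [-oo,+oo] that agree off a nowhere dense set agree on a dense set, hence  *)
(* everywhere; so the identification "equal off a nowhere dense set" is      *)
(* plain equality of functions and no quotient is needed.                    *)

Definition Cinf (R : realType) (K : topologicalType) (X : K -> \bar R) : Prop :=
  continuous X /\
  exists N : set K, nowhere_dense N /\ forall w, ~ N w -> X w \is a fin_num.

Definition fcalc (R : realType) (K : topologicalType) (n : nat)
  (f : 'rV[R]_n -> R) (X : 'I_n -> K -> \bar R) : K -> \bar R :=
  epsilon (inhabits (fun _ : K => 0%E))
    (fun Z : K -> \bar R => Cinf Z /\
       forall w, (forall i, X i w \is a fin_num) ->
         Z w = (f (\row_i fine (X i w)))%:E).

Definition cadd (R : realType) (K : topologicalType) (X Y : K -> \bar R)
  : K -> \bar R :=
  epsilon (inhabits (fun _ : K => 0%E))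
    (fun Z : K -> \bar R => Cinf Z /\
       forall w, X w \is a fin_num -> Y w \is a fin_num ->
         Z w = (X w + Y w)%E).

Definition cscale (R : realType) (K : topologicalType) (c : R) (X : K -> \bar R)
  : K -> \bar R := fun w => (c%:E * X w)%E.

Definition czero (R : realType) (K : topologicalType) : K -> \bar R :=
  fun _ => 0%E.

Definition cone (R : realType) (K : topologicalType) : K -> \bar R :=
  fun _ => 1%E.

Definition cmax (R : realType) (K : topologicalType) (X Y : K -> \bar R)
  : K -> \bar R := fun w => Order.max (X w) (Y w).

Definition cmin (R : realType) (K : topologicalType) (X Y : K -> \bar R)
  : K -> \bar R := fun w => Order.min (X w) (Y w).

Definition cabs (R : realType) (K : topologicalType) (X : K -> \bar R)
  : K -> \bar R := fun w => `|X w|%E.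

Definition cle (R : realType) (K : topologicalType) (X Y : K -> \bar R) : Prop :=
  forall w, (X w <= Y w)%E.

Definition is_sup_in (R : realType) (K : topologicalType)
  (S A : set (K -> \bar R)) (s : K -> \bar R) : Prop :=
  [/\ S s, (forall a, A a -> cle a s) &
      (forall u, S u -> (forall a, A a -> cle a u) -> cle s u)].

Definition is_inf_in (R : realType) (K : topologicalType)
  (S A : set (K -> \bar R)) (s : K -> \bar R) : Prop :=
  [/\ S s, (forall a, A a -> cle s a) &
      (forall u, S u -> (forall a, A a -> cle u a) -> cle u s)].

Definition order_complete_in (R : realType) (K : topologicalType)
  (S : set (K -> \bar R)) : Prop :=
  forall A, A `<=` S -> A !=set0 ->
    (exists u, S u /\ forall a, A a -> cle a u) ->
    exists s, is_sup_in S A s.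

Definition is_subspace (R : realType) (K : topologicalType)
  (E : set (K -> \bar R)) : Prop :=
  [/\ E `<=` @Cinf R K, E (@czero R K),
      (forall X Y, E X -> E Y -> E (cadd X Y)) &
      (forall c X, E X -> E (cscale c X))].

Definition is_sublattice (R : realType) (K : topologicalType)
  (E : set (K -> \bar R)) : Prop :=
  [/\ is_subspace E,
      (forall X Y, E X -> E Y -> E (cmax X Y)) &
      (forall X Y, E X -> E Y -> E (cmin X Y))].

Definition order_dense_ideal (R : realType) (K : topologicalType)
  (E : set (K -> \bar R)) : Prop :=
  [/\ is_subspace E,
      (forall X Y, E X -> Cinf Y -> cle (cabs Y) (cabs X) -> E Y) &
      (forall Y, Cinf Y -> cle (@czero R K) Y -> Y <> @czero R K ->
         exists X, [/\ E X, cle (@czero R K) X, X <> @czero R K & cle X Y])].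

Definition downward_directed (R : realType) (K : topologicalType)
  (D : set (K -> \bar R)) : Prop :=
  forall a b, D a -> D b -> exists c, [/\ D c, cle c a & cle c b].

Definition order_continuous_on (R : realType) (K : topologicalType)
  (E : set (K -> \bar R)) (F : (K -> \bar R) -> (K -> \bar R)) : Prop :=
  forall D, D `<=` E -> D !=set0 -> downward_directed D ->
    is_inf_in E D (@czero R K) -> is_inf_in E (F @` D) (@czero R K).

Definition cond_exp (R : realType) (K : topologicalType)
  (E : set (K -> \bar R)) (F : (K -> \bar R) -> (K -> \bar R)) : Prop :=
  (forall X, E X -> E (F X)) /\
  (forall X Y, E X -> E Y -> F (cadd X Y) = cadd (F X) (F Y)) /\
  (forall c X, E X -> F (cscale c X) = cscale c (F X)) /\
  order_continuous_on E F /\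
  (forall X, E X -> cle (@czero R K) X -> X <> @czero R K ->
     cle (@czero R K) (F X) /\ F X <> @czero R K) /\
  (forall X, E X -> F (F X) = F X) /\
  is_sublattice (F @` E) /\ order_complete_in (F @` E) /\
  (* F E = E, where E = 1 is the weak order unit *)
  F (@cone R K) = @cone R K.

(* Main.v *)
Require Import Defs.
From HB Require Import structures.
From mathcomp Require Import all_boot all_order all_algebra.
From mathcomp Require Import all_classical all_reals all_analysis.
From Stdlib Require Import ClassicalEpsilon.

Import Order.TTheory GRing.Theory Num.Theory.
Import numFieldNormedType.Exports.
Local Open Scope classical_set_scope.
Local Open Scope ring_scope.
From mathcomp Require Import ring lra.
Section PC.
Context (R : realType) (n : nat).
Local Notation V := 'rV[R]_n.

Lemma sum_cont (s : seq 'I_n) (g : 'I_n -> V -> R) : (forall i, continuous (g i)) ->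
  continuous (fun x => \sum_(i <- s) g i x).
Proof.
move=> cg; elim: s => [|i s IH].
  under eq_fun do rewrite big_nil; exact: cst_continuous.
under eq_fun do rewrite big_cons.
move=> x; exact: (continuousD (cg i x) (IH x)).
Qed.

Lemma quad_lemma (A B : R) : 0 <= B ->
  (forall l, 0 < l -> l <= 1 -> 0 <= 2 * l * A + l ^+ 2 * B) -> 0 <= A.
Proof.
move=> B0 H; rewrite leNgt; apply/negP => A0.
pose l := - A / (B - A).
have BA : 0 < B - A by lra.
have l0 : 0 < l by apply: divr_gt0; lra.
have l1 : l <= 1 by rewrite /l ler_pdivrMr //; lra.
have lB : l * B <= - A.
  rewrite /l mulrAC ler_pdivrMr //; nra.
have := H l l0 l1; nra.
Qed.

Lemma single_le (F : 'I_n -> R) i : (forall j, 0 <= F j) -> F i <= \sum_j F j.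
Proof.
move=> F0; rewrite (bigD1 i) //= lerDl; exact: sumr_ge0.
Qed.


Lemma affine_minorant (f : V -> R) : continuous f ->
  convex_function (setT : set (convex_lmodType V)) f ->
  forall (y : V) (e : R), 0 < e -> exists (a : 'I_n -> R) (b : R),
   (forall x : V, b + \sum_i a i * x ord0 i <= f x) /\
   f y - e <= b + \sum_i a i * y ord0 i.
Proof.
move=> fc fconv y e e0.
pose t0 := f y - e.
pose psi (x : V) := \sum_i (x ord0 i - y ord0 i) ^+ 2 + (Num.max (f x - t0) 0) ^+ 2.
have psic : continuous psi.
  have c1 : continuous (fun x : V => \sum_i (x ord0 i - y ord0 i) ^+ 2).
    have := (@sum_cont (index_enum 'I_n) (fun i (x : V) => (x ord0 i - y ord0 i) ^+ 2)).
    move=> H; apply: H => i z.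
    have cc : {for z, continuous (fun x : V => x ord0 i - y ord0 i)}.
      exact: (continuousB (@coord_continuous R 1 n ord0 i z) (@cst_continuous _ R (y ord0 i) z)).
    rewrite /=; under eq_fun do rewrite expr2.
    exact: (continuousM cc cc).
  have c2 : continuous (fun x : V => (Num.max (f x - t0) 0) ^+ 2).
    move=> z.
    have cc : {for z, continuous (fun x : V => f x - t0)}.
      exact: (continuousB (fc z) (@cst_continuous _ R t0 z)).
    have cm : {for z, continuous (fun x : V => Num.max (f x - t0) 0)}.
      exact: (continuous_max cc (@cst_continuous _ R 0 z)).
    under eq_fun do rewrite expr2.
    exact: (continuousM cm cm).
  move=> x; exact: (continuousD (c1 x) (c2 x)).
pose B := [set x : V | forall i, `[y ord0 i - e, y ord0 i + e]%classic (x ord0 i)].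
have cB : compact B.
  apply: (@rV_compact _ _ (fun i => `[y ord0 i - e, y ord0 i + e]%classic)) => i; exact: segment_compact.
have By : B y by move=> i; rewrite /= in_itv /=; apply/andP; split; lra.
have B0 : B !=set0 by exists y.
have [xs xsB xsmin] := EVT_min_rV B0 cB (continuous_subspaceT psic).
have psiy : psi y = e ^+ 2.
  rewrite /psi big1 ?add0r; last by move=> i _; rewrite subrr expr0n.
  by rewrite /t0 opprB addrCA subrr addr0 max_l // ltW.
have gmin x : psi xs <= psi x.
  case: (pselect (B x)) => Bx; first by apply: xsmin; rewrite inE.
  have [i Hi] : exists i, ~ `[y ord0 i - e, y ord0 i + e]%classic (x ord0 i).
    apply: Classical_Prop.NNPP => H; apply: Bx => i.
    by apply: Classical_Prop.NNPP => H'; apply: H; exists i.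
  have : e ^+ 2 < (x ord0 i - y ord0 i) ^+ 2.
    rewrite ltNge; apply/negP => H; apply: Hi; rewrite /= in_itv /=.
    apply/andP; split; nra.
  have : (x ord0 i - y ord0 i) ^+ 2 <= psi x.
    apply: le_trans (single_le (fun i => (x ord0 i - y ord0 i) ^+ 2) i _) _.
      by move=> j; exact: sqr_ge0.
    by rewrite /psi lerDl sqr_ge0.
  have := xsmin y (mem_set By).
  rewrite psiy; lra.
pose sig := Num.max (f xs - t0) 0.
pose ss := t0 + sig.
pose u i := xs ord0 i - y ord0 i.
have sig0 : 0 <= sig by rewrite /sig le_max lexx orbT.
have fss : f xs <= ss by rewrite /ss -lerBlDl /sig le_max lexx.
have psixs : psi xs = \sum_i u i ^+ 2 + sig ^+ 2 by [].
have var (x : V) : 0 <= \sum_i u i * (x ord0 i - xs ord0 i) + sig * (f x - ss).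
  pose d i := x ord0 i - xs ord0 i.
  pose del := f x - ss.
  change (0 <= \sum_i u i * d i + sig * del).
  apply: (@quad_lemma _ (\sum_i d i ^+ 2 + del ^+ 2)).
    by rewrite addr_ge0 // ?sqr_ge0 // sumr_ge0 // => i _; rewrite sqr_ge0.
  move=> l l0 l1.
  pose t := Itv01 (ltW l0) l1.
  pose xl : V := l *: x + (1 - l) *: xs.
  have fxl : f xl <= l * f x + (1 - l) * f xs.
    have := fconv t x xs (mem_set I) (mem_set I).
    by rewrite /= convRE /=.
  pose sl := l * f x + (1 - l) * ss.
  have fsl : f xl <= sl.
    apply: le_trans fxl _; rewrite /sl lerD2l; apply: ler_wpM2l => //; lra.
  have h1 : (Num.max (f xl - t0) 0) ^+ 2 <= (sl - t0) ^+ 2.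
    case: (lerP (f xl - t0) 0) => h.
      by rewrite expr0n /= sqr_ge0.
    nra.
  have h2 : \sum_i (xl ord0 i - y ord0 i) ^+ 2 =
      \sum_i u i ^+ 2 + 2 * l * (\sum_i u i * d i) + l ^+ 2 * (\sum_i d i ^+ 2).
    rewrite !mulr_sumr -!big_split /=; apply: eq_bigr => i _.
    rewrite /xl !mxE /u /d; ring.
  have h3 : sl - t0 = sig + l * del by rewrite /sl /del /ss; ring.
  have := gmin xl; rewrite psixs /psi h2 -/sig; rewrite h3 in h1.
  set Su2 := \sum_i u i ^+ 2; set Sud := \sum_i u i * d i; set Sd2 := \sum_i d i ^+ 2.
  move=> H.
  nra.
have Suy : \sum_i u i * (y ord0 i - xs ord0 i) = - \sum_i u i ^+ 2.
  rewrite -sumrN; apply: eq_bigr => i _; rewrite /u; ring.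
have Su0 : 0 <= \sum_i u i ^+ 2 by apply: sumr_ge0 => i _; exact: sqr_ge0.
have sigp : 0 < sig.
  rewrite lt_neqAle sig0 andbT; apply/negP => /eqP sig_0.
  have := var y; rewrite -sig_0 mul0r addr0 Suy oppr_ge0 => Hs.
  have u0 i : u i = 0.
    have := single_le (fun i => u i ^+ 2) i (fun j => sqr_ge0 _); move=> h; nra.
  have xsy : xs = y.
    apply/matrixP => i j; rewrite (ord1 i); apply/eqP; rewrite -subr_eq0; apply/eqP; exact: u0.
  move: sig_0; rewrite /sig xsy /t0 opprB addrCA subrr addr0 max_l ?ltW //; lra.
pose a i := - u i / sig.
pose b := ss + (\sum_i u i * xs ord0 i) / sig.
have key (x : V) : b + \sum_i a i * x ord0 i =
    ss - (\sum_i u i * (x ord0 i - xs ord0 i)) / sig.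
  have -> : \sum_i a i * x ord0 i = - (\sum_i u i * x ord0 i) / sig.
    rewrite mulNr mulr_suml -sumrN; apply: eq_bigr => i _; rewrite /a; ring.
  have -> : \sum_i u i * (x ord0 i - xs ord0 i) =
      \sum_i u i * x ord0 i - \sum_i u i * xs ord0 i.
    rewrite -sumrB; apply: eq_bigr => i _; ring.
  rewrite /b; ring.
have sign0 : sig != 0 by rewrite gt_eqF.
exists a, b; split.
  move=> x; rewrite key.
  have := var x; set S := \sum_i u i * (x ord0 i - xs ord0 i) => H.
  have H2 : 0 <= S / sig + (f x - ss).
    have -> : S / sig + (f x - ss) = (S + sig * (f x - ss)) / sig by field.
    exact: divr_ge0 H (ltW sigp).
  lra.
rewrite key Suy.
have : 0 <= (\sum_i u i ^+ 2) / sig by apply: divr_ge0 => //; exact: ltW.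
rewrite /ss /t0 mulNr; lra.
Qed.

End PC.
Section PA.
Context (R : realType) (K : topologicalType).

Definition dense_in (U : set K) :=
  forall V, open V -> V !=set0 -> (V `&` U) !=set0.

Lemma ereal_between {x y : \bar R} : (x < y)%E -> exists r : R, (x < r%:E < y)%E.
Proof.
case: x => [x||] //; case: y => [y||] //=.
- rewrite lte_fin => xy; exists ((x + y) / 2); rewrite !lte_fin.
  apply/andP; split; lra.
- by move=> _; exists (x + 1); rewrite lte_fin ltrDl ltr01 ltry.
- by move=> _; exists (y - 1); rewrite ltNyr lte_fin /=; lra.
- by move=> _; exists 0; rewrite ltNyr ltry.
Qed.

Lemma le_dense (Z1 Z2 : K -> \bar R) U : continuous Z1 -> continuous Z2 ->
  dense_in U -> (forall w, U w -> (Z1 w <= Z2 w)%E) -> cle Z1 Z2.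
Proof.
move=> c1 c2 dU H w; rewrite leNgt; apply/negP => lt21.
have [r /andP[h1 h2]] := ereal_between lt21.
pose V := Z2 @^-1` [set t | (t < r%:E)%E] `&` Z1 @^-1` [set t | (r%:E < t)%E].
have oV : open V.
  apply: openI; apply: open_comp; [move=> x _; exact: c2 | exact: open_ereal_lt_ereal
    | move=> x _; exact: c1 | exact: open_ereal_gt_ereal].
have [v [[v2 v1] Uv]] := dU V oV (ex_intro _ w (conj h1 h2)).
have := H v Uv; rewrite leNgt => /negP; apply.
exact: lt_trans v2 v1.
Qed.


Lemma open_fin (Z : K -> \bar R) : continuous Z ->
  open [set w | Z w \is a fin_num].
Proof.
move=> cZ.
have -> : [set w | Z w \is a fin_num] =
    Z @^-1` [set t | (-oo < t)%E] `&` Z @^-1` [set t | (t < +oo)%E].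
  apply/seteqP; split => w /=.
    by rewrite fin_numE => /andP[h1 h2]; split; [rewrite ltNye | rewrite ltey].
  by case=> h1 h2; rewrite fin_numE -ltNye -ltey h1 h2.
apply: openI; apply: open_comp; [move=> x _; exact: cZ | exact: open_ereal_gt_ereal
    | move=> x _; exact: cZ | exact: open_ereal_lt_ereal].
Qed.

Lemma Cinf_dense (Z : K -> \bar R) : Cinf Z -> dense_in [set w | Z w \is a fin_num].
Proof.
move=> [cZ [N [Nnd NZ]]] V oV [v Vv].
case: (pselect ((V `&` [set w | Z w \is a fin_num]) !=set0)) => // H.
have VN : V `<=` N.
  move=> x Vx; apply: Classical_Prop.NNPP => Nx; apply: H; exists x; split => //.
  exact: NZ.
have : interior (closure N) v.
  rewrite /interior; apply: (filterS (fun x Vx => subset_closure (VN x Vx))).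
  exact: open_nbhs_nbhs.
by rewrite Nnd.
Qed.

Lemma dense_inI (U1 U2 : set K) : open U1 -> dense_in U1 -> dense_in U2 ->
  dense_in (U1 `&` U2).
Proof.
move=> o1 d1 d2 V oV V0.
have [x [[Vx U1x] U2x]] := d2 _ (openI oV o1) (d1 V oV V0).
by exists x.
Qed.

Lemma fam_open_dense m (Z : 'I_m -> K -> \bar R) : (forall i, Cinf (Z i)) ->
  open [set w | forall i, Z i w \is a fin_num] /\
  dense_in [set w | forall i, Z i w \is a fin_num].
Proof.
move=> CZ.
suff H : forall s : seq 'I_m, open [set w | forall i, i \in s -> Z i w \is a fin_num] /\
  dense_in [set w | forall i, i \in s -> Z i w \is a fin_num].
  have -> : [set w | forall i, Z i w \is a fin_num] =
     [set w | forall i, i \in enum 'I_m -> Z i w \is a fin_num].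
    apply/seteqP; split => w /= h i //; apply: h; by rewrite mem_enum.
  exact: H.
elim => [|i s [IHo IHd]].
  have -> : [set w | forall i, i \in [::] -> Z i w \is a fin_num] = setT.
    by apply/seteqP; split => w // _ i.
  split; first exact: openT.
  by move=> V _ [v Vv]; exists v.
have -> : [set w | forall j, j \in i :: s -> Z j w \is a fin_num] =
   [set w | Z i w \is a fin_num] `&` [set w | forall j, j \in s -> Z j w \is a fin_num].
  apply/seteqP; split => w /=.
    by move=> h; split; [apply: h; rewrite mem_head | move=> j js; apply: h; rewrite in_cons js orbT].
  by case=> h1 h2 j; rewrite in_cons => /orP[/eqP->//|]; exact: h2.
have oi : open [set w | Z i w \is a fin_num] by apply: open_fin; case: (CZ i).
split; first exact: openI.
by apply: dense_inI => //; exact: Cinf_dense.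
Qed.


Lemma ext_thm (U : set K) (h : K -> R) : extremally_disconnected K ->
  open U -> dense_in U ->
  (forall r, open (U `&` [set w | h w < r])) ->
  (forall r, open (U `&` [set w | r < h w])) ->
  exists Z : K -> \bar R, continuous Z /\ forall w, U w -> Z w = (h w)%:E.
Proof.
move=> ED oU dU olt ogt.
pose A r := closure (U `&` [set w | h w < r]).
have Aop r : open (A r) := ED _ (olt r).
have Acl r : closed (A r) by exact: (@closed_closure K (U `&` [set w | h w < r])).

have Amono r r' : r <= r' -> A r `<=` A r'.
  move=> rr'; apply: closure_subset => w [Uw hw]; split => //; exact: lt_le_trans rr'.
have Ain w r : U w -> h w < r -> A r w.
  by move=> Uw hw; apply: subset_closure.
have Aout w r : U w -> r < h w -> ~ A r w.
  move=> Uw rh /(_ (U `&` [set w | r < h w])) [].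
    by apply: open_nbhs_nbhs; split => //; exact: ogt.
  by move=> v [[_ h1] [_ h2]]; move: (lt_trans h2 h1); rewrite ltxx.
pose Z w := ereal_inf [set r%:E | r in [set r | A r w]].
have Zle w r : A r w -> (Z w <= r%:E)%E.
  by move=> Ar; apply: ereal_inf_lbound; exists r.
have Zge w r : ~ A r w -> (r%:E <= Z w)%E.
  move=> nA; apply: le_ereal_inf_tmp => _ [r' Ar' <-].
  rewrite lee_fin leNgt; apply/negP => r'r; apply: nA; exact: Amono (ltW r'r) _ Ar'.
have Zlt w r : (Z w < r%:E)%E -> A r w.
  move=> /ereal_inf_lt [_ [r' Ar' <-]]; rewrite lte_fin => r'r.
  exact: Amono (ltW r'r) _ Ar'.
have ZU w : U w -> Z w = (h w)%:E.
  move=> Uw; apply/eqP; rewrite eq_le; apply/andP; split.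
    apply/lee_addgt0Pr => e e0; rewrite -EFinD; apply: Zle; apply: Ain => //.
    by rewrite ltrDl.
  apply: le_ereal_inf_tmp => _ [r Ar <-]; rewrite lee_fin leNgt; apply/negP => rh.
  exact: Aout Uw rh Ar.
exists Z; split => // w V /=.
have nbQ (Q : set K) : open Q -> Q w -> (forall v, Q v -> V (Z v)) ->
    nbhs w (Z @^-1` V).
  move=> oQ Qw QV; apply: filterS (open_nbhs_nbhs (conj oQ Qw)) => v; exact: QV.
case Zw : (Z w) => [z||] HV.
- have HV' : nbhs z (fun r => V r%:E) := HV.
  move: HV' => /nbhs_ballP [e /= e0 He].
  apply: (nbQ (A (z + e / 2) `&` ~` A (z - e / 2))).
  + exact: openI (Aop _) (closed_openC (Acl _)).
  + split.
      by apply: Zlt; rewrite Zw lte_fin; lra.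
    by move=> /Zle; rewrite Zw lee_fin; lra.
  + move=> v [h1 h2]; have := Zle _ _ h1; have := Zge _ _ h2.
    case: (Z v) => [t||] //= ; rewrite ?lee_fin // => b1 b2.
    apply: He; rewrite /ball /=; rewrite ltr_norml; apply/andP; split; lra.
- move: HV => /= [M [Mr HM]].
  apply: (nbQ (~` A (M + 1))).
  + exact: closed_openC (Acl _).
  + by move=> /Zle; rewrite Zw.
  + move=> v /Zge h1; apply: HM; apply: lt_le_trans h1; rewrite lte_fin; lra.
- move: HV => /= [M [Mr HM]].
  apply: (nbQ (A (M - 1))).
  + exact: Aop.
  + by apply: Zlt; rewrite Zw ltNyr.
  + move=> v /Zle h1; apply: HM; apply: le_lt_trans h1 _; rewrite lte_fin; lra.
Qed.


Lemma open_fam m (Z : 'I_m -> K -> \bar R) (U : set K) (O : set 'rV[R]_m) :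
  (forall i, continuous (Z i)) -> open U ->
  (forall w, U w -> forall i, Z i w \is a fin_num) -> open O ->
  open (U `&` [set w | O (\row_i fine (Z i w))]).
Proof.
move=> cZ oU Ufin oO; rewrite openE => w [Uw Ow].
have : nbhs (\row_i fine (Z i w)) O by apply: open_nbhs_nbhs.
move=> /nbhs_ballP [e /= e0 He].
have Hi i : \forall v \near w, Z i v \is a fin_num /\ ball (fine (Z i w)) e (fine (Z i v)).
  have fw := Ufin w Uw i.
  have : nbhs (Z i w) [set t | t \is a fin_num /\ ball (fine (Z i w)) e (fine t)].
    rewrite -(fineK fw).
    have H : nbhs (fine (Z i w)) (fun r => r%:E \is a fin_num /\ ball (fine (Z i w)) e (fine r%:E)).
      by apply/nbhs_ballP; exists e => // r hr; split.
    exact: H.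
  move=> H; exact: (cZ i w _ H).
have := @filter_forall K _ _ (nbhs w) (nbhs_filter w) Hi.
move=> H; apply: (filterS _ (filterI H (open_nbhs_nbhs (conj oU Uw)))).
move=> v [Hv Uv]; split => //; apply: He.
split => // i0 j; rewrite !mxE; exact: (Hv j).2.
Qed.

Lemma complU_nd (U : set K) : open U -> dense_in U -> nowhere_dense (~` U).
Proof.
move=> oU dU; rewrite /nowhere_dense; apply/seteqP; split => // x.
rewrite /interior nbhsE => -[B [oB Bx] BC].
have [u [Bu Uu]] := dU B oB (ex_intro _ x Bx).
have := BC u Bu (U).
move=> /(_ (open_nbhs_nbhs (conj oU Uu))) [v [nUv Uv]]; exact: nUv Uv.
Qed.


Lemma fcalc_exists m (f : 'rV[R]_m -> R) (Z : 'I_m -> K -> \bar R) :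
  extremally_disconnected K -> continuous f -> (forall i, Cinf (Z i)) ->
  exists Y : K -> \bar R, Cinf Y /\ forall w, (forall i, Z i w \is a fin_num) ->
     Y w = (f (\row_i fine (Z i w)))%:E.
Proof.
move=> ED fc CZ.
have [oU dU] := @fam_open_dense m Z CZ.
have cZ i : continuous (Z i) by case: (CZ i).
have [Y [cY HY]] := @ext_thm [set w | forall i, Z i w \is a fin_num]
   (fun w => f (\row_i fine (Z i w))) ED oU dU
   (fun r => @open_fam m Z _ _ cZ oU (fun w Uw => Uw) (open_comp (fun x _ => fc x) (open_lt (y:=r))))
   (fun r => @open_fam m Z _ _ cZ oU (fun w Uw => Uw) (open_comp (fun x _ => fc x) (open_gt (y:=r)))).
exists Y; split => //.
split => //; exists (~` [set w | forall i, Z i w \is a fin_num]); split.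
  exact: complU_nd.
move=> w /Classical_Prop.NNPP Uw; rewrite HY //.
Qed.

Lemma fcalc_spec m (f : 'rV[R]_m -> R) (Z : 'I_m -> K -> \bar R) :
  extremally_disconnected K -> continuous f -> (forall i, Cinf (Z i)) ->
  Cinf (fcalc f Z) /\ forall w, (forall i, Z i w \is a fin_num) ->
     fcalc f Z w = (f (\row_i fine (Z i w)))%:E.
Proof.
move=> ED fc CZ; exact: (epsilon_spec _ _ (@fcalc_exists m f Z ED fc CZ)).
Qed.

Lemma cadd_spec (X Y : K -> \bar R) : extremally_disconnected K ->
  Cinf X -> Cinf Y ->
  Cinf (Defs.cadd X Y) /\ forall w, X w \is a fin_num -> Y w \is a fin_num ->
     Defs.cadd X Y w = (X w + Y w)%E.
Proof.
move=> ED CX CY.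
suff H : exists Z : K -> \bar R, Cinf Z /\ forall w, X w \is a fin_num -> Y w \is a fin_num ->
     Z w = (X w + Y w)%E by exact: (epsilon_spec _ _ H).
pose Z2 := fun i : 'I_2 => if i == ord0 then X else Y.
pose f2 := fun v : 'rV[R]_2 => v ord0 ord0 + v ord0 ord_max.
have f2c : continuous f2.
  move=> v; exact: (continuousD (@coord_continuous R 1 2 ord0 ord0 v)
     (@coord_continuous R 1 2 ord0 ord_max v)).
have CZ i : Cinf (Z2 i) by rewrite /Z2; case: (i == ord0).
have [W [CW HW]] := @fcalc_exists 2 f2 Z2 ED f2c CZ.
exists W; split => // w Xw Yw.
rewrite HW; last by move=> i; rewrite /Z2; case: (i == ord0).
by rewrite /f2 !mxE /Z2 /= EFinD !fineK.
Qed.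

End PA.

Section PB.
Context (R : realType) (K : topologicalType) (n : nat).

Definition lincomb (a : 'I_n -> R) (b : R) (Z : 'I_n -> K -> \bar R) (s : seq 'I_n)
  : K -> \bar R :=
  foldr (fun i acc => Defs.cadd (Defs.cscale (a i) (Z i)) acc)
    (Defs.cscale b (@cone R K)) s.

Variable (E : set (K -> \bar R)).
Hypothesis HE : is_subspace E.
Hypothesis HE1 : E (@cone R K).
Hypothesis ED : extremally_disconnected K.

Lemma lin_E a b Z s : (forall i, E (Z i)) -> E (lincomb a b Z s).
Proof.
case: HE => _ _ Hadd Hsc EZ; elim: s => [|i s IH] /=; first exact: Hsc.
by apply: Hadd => //; exact: Hsc.
Qed.

Lemma lin_F (F : (K -> \bar R) -> (K -> \bar R)) a b Z s : cond_exp E F ->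
  (forall i, E (Z i)) -> F (lincomb a b Z s) = lincomb a b (fun i => F (Z i)) s.
Proof.
move=> [FE [Fadd [Fscale [_ [_ [_ [_ [_ F1]]]]]]]] EZ.
case: (HE) => _ _ Hadd Hsc.
elim: s => [|i s IH] /=; first by rewrite Fscale // F1.
rewrite Fadd; [|exact: Hsc|exact: lin_E].
by rewrite Fscale // IH.
Qed.

Lemma lin_val a b Z s : (forall i, E (Z i)) -> forall w, (forall i, Z i w \is a fin_num) ->
  lincomb a b Z s w = (b + \sum_(i <- s) a i * fine (Z i w))%:E.
Proof.
move=> EZ w Zw; case: (HE) => Hsub _ Hadd Hsc.
elim: s => [|i s IH] /=.
  by rewrite big_nil addr0 /Defs.cscale /cone mule1.
have CA : Cinf (Defs.cscale (a i) (Z i)) by apply: Hsub; exact: Hsc.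
have CB : Cinf (lincomb a b Z s) by apply: Hsub; exact: lin_E.
have vA : Defs.cscale (a i) (Z i) w = (a i * fine (Z i w))%:E.
  by rewrite /Defs.cscale -{1}(fineK (Zw i)) -EFinM.
rewrite (@cadd_spec R K _ _ ED CA CB).2; last by rewrite IH.
  by rewrite vA IH -EFinD big_cons; congr (_%:E); ring.
by rewrite vA.
Qed.

End PB.

Theorem mainTheorem9 (R : realType) (K : topologicalType)
  (E : set (K -> \bar R))
  (HK : stonean K)
  (HE : order_dense_ideal E)
  (HEc : order_complete_in E)
  (HE1 : E (@cone R K))
  (n : nat) (f : 'rV[R]_n -> R)
  (Hfc : continuous f)
  (Hfconv : convex_function (setT : set (convex_lmodType 'rV[R]_n)) f)
  (X : 'I_n -> K -> \bar R) (HX : forall i, E (X i))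
  (F : (K -> \bar R) -> (K -> \bar R)) (HF : cond_exp E F)
  (HfX : E (fcalc f X)) :
  cle (fcalc f (fun i => F (X i))) (F (fcalc f X)).
Proof.
have [HEs _ _] := HE.
have [HEsub HE0 HEadd HEscale] := HEs.
have [_ _ ED] := HK.
have HF' := HF.
have [FE [Fadd [Fscale [_ [Fpos [_ [_ [_ F1]]]]]]]] := HF'.
pose Y := fun i => F (X i).
have CX i : Cinf (X i) := HEsub _ (HX i).
have EY i : E (Y i) := FE _ (HX i).
have CY i : Cinf (Y i) := HEsub _ (EY i).
have [CQ HQ] := @fcalc_spec R K n f Y ED Hfc CY.
have [CP HP] := @fcalc_spec R K n f X ED Hfc CX.
have EFP : E (F (fcalc f X)) := FE _ HfX.
have CFP := HEsub _ EFP.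
have [oY dY] := @fam_open_dense R K n Y CY.
have [oX dX] := @fam_open_dense R K n X CX.
apply: (@le_dense R K _ _ _ CQ.1 CFP.1 (@dense_inI K _ _ oY dY (@Cinf_dense R K _ CFP))) => w [/= Yw FPw].
rewrite (HQ w Yw) -(fineK FPw) lee_fin.
set yv := \row_i fine (Y i w).
apply/ler_addgt0Pr => e e0.
have [a [b [Ha Hb]]] := @affine_minorant R n f Hfc Hfconv yv e e0.
pose G := lincomb R K n a b X (index_enum 'I_n).
have EG : E G := @lin_E R K n E HEs HE1 a b X _ HX.
have FG : F G = lincomb R K n a b Y (index_enum 'I_n) := @lin_F R K n E HEs HE1 F a b X _ HF HX.
have EmG : E (Defs.cscale (-1) G) := HEscale _ _ EG.
pose D := Defs.cadd (fcalc f X) (Defs.cscale (-1) G).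
have EDD : E D := HEadd _ _ HfX EmG.
have D0 : cle (@Defs.czero R K) D.
  apply: (@le_dense R K _ _ _ (@cst_continuous K (\bar R) 0%E) (HEsub _ EDD).1 dX) => v /= Xv.
  have Gv := @lin_val R K n E HEs HE1 ED a b X (index_enum 'I_n) HX v Xv.
  have fP : fcalc f X v \is a fin_num by rewrite (HP v Xv).
  have fG : Defs.cscale (-1) G v \is a fin_num by rewrite /Defs.cscale /G Gv.
  rewrite /D (@cadd_spec R K _ _ ED CP (HEsub _ EmG)).2 //.
  rewrite /Defs.cscale /G Gv (HP v Xv) -EFinM -EFinD lee_fin.
  have := Ha (\row_i fine (X i v)).
  under eq_bigr do rewrite mxE.
  lra.
have FD0 : cle (@Defs.czero R K) (F D).
  case: (pselect (D = @Defs.czero R K)) => [->|Dn0]; last exact: (Fpos _ EDD D0 Dn0).1.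
  have -> : F (@Defs.czero R K) = @Defs.czero R K.
    have h0 : Defs.cscale 0 (@Defs.czero R K) = @Defs.czero R K.
      by apply/funext => v; rewrite /Defs.cscale mul0e.
    rewrite -{1}h0 (Fscale _ _ HE0); apply/funext => v.
    by rewrite /Defs.cscale mul0e.
  by move=> v; rewrite lexx.
have := FD0 w.
have CFG : Cinf (Defs.cscale (-1) (F G)) by apply: HEsub; rewrite FG; apply: HEscale; exact: (@lin_E R K n E HEs HE1 a b Y _ EY).
have FGv := @lin_val R K n E HEs HE1 ED a b Y (index_enum 'I_n) EY w Yw.
have fG : Defs.cscale (-1) (F G) w \is a fin_num by rewrite /Defs.cscale FG FGv.
rewrite /D Fadd // Fscale // (@cadd_spec R K _ _ ED CFP CFG).2 //.
rewrite /Defs.cscale FG FGv -(fineK FPw) -EFinM -EFinD lee_fin.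
have : \sum_i a i * yv ord0 i = \sum_(i <- index_enum 'I_n) a i * fine (Y i w).
  by apply: eq_bigr => i _; rewrite mxE.
move: Hb; rewrite /= => Hb Hs; rewrite /Defs.czero.
move=> H; rewrite Hs in Hb; move: H Hb; set s1 := \sum_(i < n) _; set s2 := fine _; set s3 := f yv; clearbody s1 s2 s3; move=> H Hb; lra.
Qed.
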